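(* Let $G=(V(G),E(G),\ell)$ be an $n$-order node-labeled graph and $k\ge 2$. Then for all $t\ge 1$ there exist functions $g^{(0)},\dots,g^{(t)}\colon V(G)^k\to\mathbb{R}$, scalars $\beta_1,\dots,\beta_k$ and feed-forward networks $\mathsf{FFN}$ with $$g^{(s)}(\mathbf{u})=\mathsf{FFN}\Big(g^{(s-1)}(\mathbf{u})+\sum_{j\in[k]}\beta_j\sum_{w\in V(G)}g^{(s-1)}(\phi_j(\mathbf{u},w))\Big)\quad(1\le s\le t),$$ where $g^{(0)}$ is initialized consistently with the labels $\ell$ and the atomic types (i.e., $g^{(0)}(\mathbf{u})=g^{(0)}(\mathbf{v})\iff C^k_0(\mathbf{u})=C^k_0(\mathbf{v})$), such that for all $\mathbf{u},\mathbf{v}\in V(G)^k$, $$C^k_t(\mathbf{u})=C^k_t(\mathbf{v})\iff g^{(t)}(\mathbf{u})=g^{(t)}(\mathbf{v}).$$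
   Context: $\phi_j(\mathbf{v},w)=(v_1,\dots,v_{j-1},w,v_{j+1},\dots,v_k)$. $C^k_t$ is the $k$-WL coloring of $k$-tuples: $C^k_0(\mathbf{v})$ is determined by the atomic type of $\mathbf{v}$ (which pairs of entries are equal and which are adjacent) together with the labels $\ell(v_1),\dots,\ell(v_k)$, and $C^k_t(\mathbf{v})=\mathsf{RELABEL}\big(C^k_{t-1}(\mathbf{v}),(\{\!\{C^k_{t-1}(\phi_j(\mathbf{v},w))\mid w\in V(G)\}\!\})_{j=1}^k\big)$ with $\mathsf{RELABEL}$ injective into fresh natural numbers. $\mathsf{FFN}$ denotes a feed-forward (MLP) network. *)

(* Defs.v *)
From HB Require Import structures.
From mathcomp Require Import all_boot all_order all_algebra.
From mathcomp Require Import reals.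
Set Implicit Arguments. Unset Strict Implicit. Unset Printing Implicit Defensive.
Import Order.TTheory GRing.Theory Num.Theory.
Local Open Scope ring_scope.

Section KWL.
Variables (V : finType) (L : eqType) (adj : rel V) (lab : V -> L) (k : nat).

Definition ktuple := {ffun 'I_k -> V}.

Definition phi (j : 'I_k) (v : ktuple) (w : V) : ktuple :=
  [ffun i => if i == j then w else v i].

Definition atp_eq (u v : ktuple) : bool :=
  [forall i, forall j, ((u i == u j) == (v i == v j)) &&
                       (adj (u i) (u j) == adj (v i) (v j))]
  && [forall i, lab (u i) == lab (v i)].

(* Since RELABEL is injective,
   C_t(u) = C_t(v) iff C_{t-1}(u) = C_{t-1}(v) and, for every j, the
   multisets {{C_{t-1}(phi_j(u,w)) | w}} and {{C_{t-1}(phi_j(v,w)) | w}}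
   coincide, i.e. every colour (= colour of some k-tuple x) occurs equally
   often in both. *)
Fixpoint kwl_eq (t : nat) (u v : ktuple) : bool :=
  match t with
  | 0 => atp_eq u v
  | t'.+1 => kwl_eq t' u v &&
      [forall j : 'I_k, forall x : ktuple,
         #|[set w | kwl_eq t' (phi j u w) x]| ==
         #|[set w | kwl_eq t' (phi j v w) x]|]
  end.
End KWL.

Section FFN.
Variable R : realType.

Definition relu_v n (x : 'cV[R]_n) : 'cV[R]_n := map_mx (fun a => Num.max a 0) x.

Inductive mlp : nat -> nat -> Type :=
| mlp_affine : forall m n, 'M[R]_(n, m) -> 'cV[R]_n -> mlp m n
| mlp_layer : forall m h n, 'M[R]_(h, m) -> 'cV[R]_h -> mlp h n -> mlp m n.

Fixpoint mlp_eval m n (N : mlp m n) : 'cV[R]_m -> 'cV[R]_n :=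
  match N in mlp m n return 'cV[R]_m -> 'cV[R]_n with
  | mlp_affine _ _ W b => fun x => W *m x + b
  | mlp_layer _ _ _ W b N' => fun x => mlp_eval N' (relu_v (W *m x + b))
  end.

Definition FFN := mlp 1 1.
Definition ffn_eval (N : FFN) (a : R) : R := mlp_eval N (a%:M) 0 0.
End FFN.

(* Main.v *)
Require Import Defs.
From HB Require Import structures.
From mathcomp Require Import all_boot all_order all_algebra.
From mathcomp Require Import reals.
From mathcomp Require Import ring lra.
Import GRing.Theory Num.Theory.

Lemma dig B k (x y : 'I_k -> nat) : 1 < B -> (forall i, x i < B) -> (forall i, y i < B) ->
  \sum_(i < k) B ^ i * x i = \sum_(i < k) B ^ i * y i -> forall i, x i = y i.
Proof.
move=> B1; elim: k x y => [|k IH] x y hx hy; first by move=> _ [].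
rewrite !big_ord_recl /= !expn0 !mul1n.
have E: forall z : 'I_k.+1 -> nat, \sum_(i < k) B ^ bump 0 i * z (lift ord0 i)
   = B * \sum_(i < k) B ^ i * z (lift ord0 i).
  move=> z; rewrite big_distrr /=; apply: eq_bigr => i _.
  by rewrite /bump /= add1n expnS mulnA.
rewrite !E => H.
have H0 : x ord0 = y ord0.
  have := congr1 (modn^~ B) H.
  by rewrite ![_ + B * _]addnC ![B * _]mulnC !modnMDl !modn_small ?hx ?hy.
move: H; rewrite H0 => /addnI /eqP; rewrite eqn_pmul2l ?(ltn_trans _ B1) // => /eqP H.
have IH' := IH _ _ (fun i => hx _) (fun i => hy _) H.
move=> i; case: (unliftP ord0 i) => [j ->|->] //.
Qed.

Lemma dig_bound B k (x : 'I_k -> nat) : 0 < B -> (forall i, x i < B) ->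
  \sum_(i < k) B ^ i * x i < B ^ k.
Proof.
move=> B0; elim: k x => [|k IH] x hx; first by rewrite big_ord0.
rewrite big_ord_recr /=.
have h1 := IH (fun i => x (widen_ord (leqnSn k) i)) (fun i => hx _).
apply: (@leq_trans (B ^ k + B ^ k * x ord_max)).
  by rewrite ltn_add2r.
rewrite -{1}(muln1 (B ^ k)) -mulnDr expnS mulnC leq_mul2r.
by rewrite add1n hx orbT.
Qed.

Section Cls.
Variables (V : finType) (L : eqType) (adj : rel V) (lab : V -> L) (k : nat).
Notation T := (ktuple V k).
Notation kw := (@kwl_eq V L adj lab k).

Lemma kw_refl s u : kw s u u.
Proof.
elim: s u => [|s IH] u /=.
  by apply/andP; split; apply/forallP => i; rewrite ?eqxx //; apply/forallP => j; rewrite !eqxx.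
by rewrite IH /=; apply/forallP => j; apply/forallP => x.
Qed.

Lemma kw_sym s u v : kw s u v -> kw s v u.
Proof.
elim: s u v => [|s IH] u v /=.
  case/andP => /forallP h1 /forallP h2; apply/andP; split; apply/forallP => i.
    apply/forallP => j; have /andP[/eqP -> /eqP ->] := forallP (h1 i) j; by rewrite !eqxx.
  by rewrite eq_sym.
case/andP => /IH -> /forallP h /=; apply/forallP => j; apply/forallP => x.
by rewrite eq_sym; apply: (forallP (h j)).
Qed.

Lemma kw_trans s u v w : kw s u v -> kw s v w -> kw s u w.
Proof.
elim: s u v w => [|s IH] u v w /=.
  case/andP => /forallP h1 /forallP h2; case/andP => /forallP h3 /forallP h4.
  apply/andP; split; apply/forallP => i.
    apply/forallP => j; have /andP[/eqP -> /eqP ->] := forallP (h1 i) j.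
    exact: (forallP (h3 i) j).
  by rewrite (eqP (h2 i)) (eqP (h4 i)).
case/andP => /IH h /forallP h1; case/andP => /h -> /forallP h2 /=.
apply/forallP => j; apply/forallP => x.
by rewrite (eqP (forallP (h1 j) x)) (eqP (forallP (h2 j) x)).
Qed.

Arguments kw_sym {s u v}.
Arguments kw_trans {s u v w}.
Definition rep s (u : T) : T := odflt u [pick x | kw s u x].
Lemma rep_spec s u : kw s u (rep s u).
Proof. by rewrite /rep; case: pickP => [x ->|/= _] //; exact: kw_refl. Qed.

Definition cls s (u : T) : 'I_#|T| := enum_rank (rep s u).

Lemma cls_eq s u v : (cls s u == cls s v) = kw s u v.
Proof.
apply/idP/idP.
  move/eqP/enum_rank_inj => e.
  apply: kw_trans (rep_spec s u) _; rewrite e; apply: kw_sym; exact: rep_spec.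
move=> h; apply/eqP; congr enum_rank; rewrite /rep.
have -> : [pick x | kw s u x] = [pick x | kw s v x].
  apply: eq_pick => x; apply/idP/idP => h'.
    exact: kw_trans (kw_sym h) h'.
  exact: kw_trans h h'.
case: pickP => [x _|/(_ v)] //=; by rewrite kw_refl.
Qed.
End Cls.

Lemma dig2 B k x0 y0 (x y : 'I_k -> nat) : 1 < B -> x0 < B -> y0 < B ->
  (forall i, x i < B) -> (forall i, y i < B) ->
  x0 + \sum_(i < k) B ^ i.+1 * x i = y0 + \sum_(i < k) B ^ i.+1 * y i ->
  x0 = y0 /\ forall i, x i = y i.
Proof.
move=> B1 hx0 hy0 hx hy.
have E: forall z : 'I_k -> nat, \sum_(i < k) B ^ i.+1 * z i = B * \sum_(i < k) B ^ i * z i.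
  by move=> z; rewrite big_distrr /=; apply: eq_bigr => i _; rewrite expnS mulnA.
rewrite !E => H.
have H0 : x0 = y0.
  have := congr1 (modn^~ B) H.
  by rewrite ![_ + B * _]addnC ![B * _]mulnC !modnMDl !modn_small.
split => //; move: H; rewrite H0 => /addnI /eqP; rewrite eqn_pmul2l ?(ltn_trans _ B1) // => /eqP H.
exact: dig H.
Qed.

Arguments dig2 {B k x0 y0 x y}.
Arguments dig {B k x y}.
Section Main.
Variables (V : finType) (L : eqType) (adj : rel V) (lab : V -> L) (k : nat).
Notation T := (ktuple V k).
Notation kw := (@kwl_eq V L adj lab k).
Notation cls := (@cls V L adj lab k).
Definition BB := #|V|.+2.
Definition MM := #|T|.

Definition inner s (u : T) (j : 'I_k) := \sum_(w : V) BB ^ cls s (phi j u w).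
Definition argN s (u : T) := BB ^ cls s u + \sum_(j < k) (BB ^ MM) ^ j.+1 * inner s u j.

Lemma inner_dig s u j : inner s u j =
  \sum_(i < MM) BB ^ i * #|[set w | cls s (phi j u w) == i]|.
Proof.
rewrite /inner (partition_big (fun w => cls s (phi j u w)) predT) //=.
apply: eq_bigr => i _.
rewrite (eq_bigr (fun _ => BB ^ i)) => [|w /eqP -> //].
by rewrite sum_nat_cond_const mulnC.
Qed.

Lemma BB1 : 1 < BB. Proof. by []. Qed.

Lemma argN_inj s u v : argN s u = argN s v -> kw s.+1 u v.
Proof.
move=> E.
have M0 : 0 < MM by apply/card_gt0P; exists u.
have B1 : 1 < BB ^ MM by rewrite -(exp1n MM) ltn_exp2r // -lt0n.
have cntB : forall (x : T) j i, #|[set w | cls s (phi j x w) == i]| < BB.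
  move=> x j i; apply: (leq_ltn_trans (max_card _)); by rewrite /BB.
have inB : forall x j, inner s x j < BB ^ MM.
  move=> x j; rewrite inner_dig; apply: dig_bound => //.
have lt0 : forall x : T, BB ^ cls s x < BB ^ MM by move=> x; rewrite ltn_exp2l // ltn_ord.
have [h0 h1] := dig2 B1 (lt0 u) (lt0 v) (inB u) (inB v) E.
have c0 : cls s u = cls s v by apply: ord_inj; exact: expnI BB1 _ _ h0.
simpl; rewrite -cls_eq c0 eqxx /=.
apply/forallP => j; apply/forallP => x; apply/eqP.
have SE : forall y : T, [set w | kw s (phi j y w) x] = [set w | cls s (phi j y w) == cls s x].
  by move=> y; apply/setP => w; rewrite !inE cls_eq.
rewrite !SE.
have := h1 j; rewrite !inner_dig => /(dig BB1 (cntB u j) (cntB v j)) H.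
exact: H.
Qed.
End Main.

Import Order.TTheory.
Local Open Scope ring_scope.

Section Interp.
Variable R : realType.

Definition rl (a : R) := Num.max a 0.
Definition tentf (z : R) := rl (z + 1) - 2 * rl z + rl (z - 1).
Lemma rlP (a : R) : 0 <= a -> rl a = a.
Proof. by move=> h; rewrite /rl max_l. Qed.
Lemma rlN (a : R) : a <= 0 -> rl a = 0.
Proof. by move=> h; rewrite /rl max_r. Qed.

Lemma tent0 : tentf 0 = 1.
Proof. rewrite /tentf add0r sub0r rlP // rlP // rlN ?oppr_le0 //; lra. Qed.

Lemma tent_far z : 1 <= `|z| -> tentf z = 0.
Proof.
rewrite /tentf; case: (lerP 0 z) => hz.
  rewrite ger0_norm // => h1; rewrite !rlP; [lra|lra|lra|lra].
rewrite ltr0_norm // => h1; rewrite !rlN; [lra|lra|lra|lra].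
Qed.
End Interp.

Section Net.
Variable R : realType.
Variable T : finType.
Variables (a y : T -> R).
Definition offq (q : 'I_3) : R := if val q == 0%N then 1 else if val q == 1%N then 0 else -1.
Definition coefq (q : 'I_3) : R := if val q == 0%N then 1 else if val q == 1%N then -2 else 1.
Definition KK : R := 1 + \sum_(t1 : T) \sum_(t2 : T) `|a t1 - a t2|^-1.
Definition cnt (t : T) : nat := #|[set t' | a t' == a t]|.
Definition HH := #|{: T * 'I_3}|.
Definition net : FFN R :=
  mlp_layer (\matrix_(p < HH, _ < 1) KK)
    (\col_(p < HH) (offq (enum_val p).2 - KK * a (enum_val p).1))
    (mlp_affine (\matrix_(_ < 1, p < HH) (coefq (enum_val p).2 * (y (enum_val p).1 / (cnt (enum_val p).1)%:R))) 0).

Lemma net_eval x : ffn_eval net x =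
  \sum_(t : T) (y t / (cnt t)%:R) * @tentf R (KK * (x - a t)).
Proof.
rewrite /ffn_eval /net /= mul_mx_scalar !mxE.
rewrite (eq_bigr (fun p => (fun tq : T * 'I_3 => coefq tq.2 * (y tq.1 / (cnt tq.1)%:R) *
   @rl R (x * KK + (offq tq.2 - KK * a tq.1))) (enum_val p))); last first.
  by move=> p _; rewrite !mxE.
rewrite addr0.
rewrite -(big_enum_val (fun tq : T * 'I_3 => coefq tq.2 * (y tq.1 / (cnt tq.1)%:R) *
   @rl R (x * KK + (offq tq.2 - KK * a tq.1)))) /=.
rewrite -(pair_big predT predT (fun t q => coefq q * (y t / (cnt t)%:R) *
   @rl R (x * KK + (offq q - KK * a t)))) /=.
apply: eq_bigr => t _.
rewrite !big_ord_recl big_ord0 /tentf /coefq /offq /=.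
rewrite !addr0. 
have -> : x * KK + (1 - KK * a t) = KK * (x - a t) + 1 by ring.
have -> : x * KK + (0 - KK * a t) = KK * (x - a t) by ring.
have -> : x * KK + (-1 - KK * a t) = KK * (x - a t) - 1 by ring.
ring.
Qed.

Lemma KK_ge0 : 0 <= KK.
Proof. rewrite /KK; apply: addr_ge0 => //; apply: sumr_ge0 => i _; apply: sumr_ge0 => j _; by rewrite invr_ge0. Qed.

Lemma KK_ge t1 t2 : `|a t1 - a t2|^-1 <= KK.
Proof.
rewrite /KK (bigD1 t1) //= (bigD1 t2) //=.
have h1 : 0 <= \sum_(i | i != t2) `|a t1 - a i|^-1 by apply: sumr_ge0 => i _; rewrite invr_ge0.
have h2 : 0 <= \sum_(i | i != t1) \sum_t2 `|a i - a t2|^-1.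
  by apply: sumr_ge0 => i _; apply: sumr_ge0 => j _; rewrite invr_ge0.
lra.
Qed.

Lemma net_ok (hyp : forall u v, a u = a v -> y u = y v) u : ffn_eval net (a u) = y u.
Proof.
rewrite net_eval.
have T1 : forall t, @tentf R (KK * (a u - a t)) = (a t == a u)%:R.
  move=> t; case: eqP => [->|ne]; first by rewrite subrr mulr0 tent0.
  apply: tent_far; rewrite normrM (ger0_norm KK_ge0).
  have nz : `|a u - a t| != 0 by rewrite normr_eq0 subr_eq0; apply/eqP => e; apply: ne.
  apply: (@le_trans _ _ (`|a u - a t|^-1 * `|a u - a t|)); first by rewrite mulVf.
  by rewrite ler_wpM2r // KK_ge.
rewrite (eq_bigr (fun t => if a t == a u then y u / (cnt u)%:R else 0)); last first.
  move=> t _; rewrite T1; case: eqP => [e|_]; last by rewrite mulr0.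
  by rewrite mulr1 (hyp _ _ e) /cnt e.
rewrite -big_mkcond /= sumr_const /cnt cardsE -(mulr_natr (y u / _)) divfK //.
rewrite pnatr_eq0 -lt0n; apply/card_gt0P; exists u; rewrite /in_mem /=; exact: eqxx.
Qed.

Lemma interp (hyp : forall u v, a u = a v -> y u = y v) :
  {N : FFN R | forall u, ffn_eval N (a u) = y u}.
Proof. by exists net; exact: net_ok. Qed.
End Net.

Lemma g_eq (R : realType) (V : finType) (L : eqType) adj lab k s (u v : ktuple V k) :
  ((BB V ^ cls V L adj lab k s u)%:R == (BB V ^ cls V L adj lab k s v)%:R :> R)
  = kwl_eq adj lab s u v.
Proof.
rewrite eqr_nat -cls_eq; apply/eqP/eqP => [h|-> //].
by apply: ord_inj; apply: (expnI (BB1 V)).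
Qed.

Theorem propositionI2 (R : realType) (V : finType) (L : eqType)
  (adj : rel V) (adj_sym : symmetric adj) (adj_irr : irreflexive adj)
  (lab : V -> L) (k : nat) (hk : (2 <= k)%N) (t : nat) (ht : (1 <= t)%N) :
  exists (g : nat -> ktuple V k -> R) (beta : 'I_k -> R) (ffn : nat -> FFN R),
    (forall u v, g 0%N u = g 0%N v <-> kwl_eq adj lab 0 u v) /\
    (forall s, (1 <= s <= t)%N -> forall u,
        g s u = ffn_eval (ffn s)
          (g s.-1 u + \sum_(j < k) beta j * \sum_(w : V) g s.-1 (phi j u w))) /\
    (forall u v, kwl_eq adj lab t u v <-> g t u = g t v).
Proof.
pose g := fun s (u : ktuple V k) => ((BB V ^ cls V L adj lab k s u)%:R : R).
have hyp : forall s u v, (argN V L adj lab k s u)%:R = (argN V L adj lab k s v)%:R :> R ->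
    g s.+1 u = g s.+1 v.
  move=> s u v /eqP; rewrite eqr_nat => /eqP /argN_inj h.
  by apply/eqP; rewrite g_eq.
pose ffn := fun s => sval (@interp R _ (fun u => (argN V L adj lab k s.-1 u)%:R) _ (hyp s.-1)).
exists g, (fun j => (((BB V ^ MM V k) ^ j.+1)%N)%:R), ffn.
split; [|split].
- move=> u v; rewrite /g -(g_eq R); split; [by move/eqP | by move/eqP].
- move=> s /andP[s1 _] u.
  rewrite /ffn; case: (interp _ _) => N /= HN.
  rewrite -[in LHS](prednK s1) -HN /argN /inner /g.
  rewrite natrD natr_sum; do 2 f_equal; apply: eq_bigr => j _.
  by rewrite natrM natr_sum.
- move=> u v; rewrite /g -(g_eq R); split; [by move/eqP | by move/eqP].
Qed.
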